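(* In the setting described in the context, there exists $\overline\alpha>0$ such that for every $\alpha\in[0,\overline\alpha]$, the function $z_{1,\alpha}$ is nonnegative on $(0,R)$.
   Context: Let $n=2$, $\Omega=\mathbb B(0,R)$, $0<m_0<\kappa$, $r_0^*\in(0,R)$ with $\kappa|\mathbb B(0,r_0^* )|=m_0|\Omega|$, $m_0^*=\kappa\mathds 1_{\mathbb B(0,r_0^* )}$ and $\sigma_\alpha=1+\alpha m_0^*$. Let $\lambda_{0,\alpha}$ be the principal Dirichlet eigenvalue of $u\mapsto-\nabla\cdot(\sigma_\alpha\nabla u)-m_0^*u$ on $\Omega$ and $u_{0,\alpha}$ the nonnegative $L^2$-normalized eigenfunction, which is radial; we write $u_{0,\alpha}(r)$ for its profile. For $f$ defined near $r_0^*$, $f|_{int}(r_0^* )$, $f|_{ext}(r_0^* )$ denote the one-sided limits from $r<r_0^*$ and $r>r_0^*$, and $[\![f]\!]=f|_{ext}-f|_{int}$. For $k\ge1$, $z_{k,\alpha}:[0,R]\to\mathbb{R}$ is the solution of $-\sigma_\alpha z''-\frac{\sigma_\alpha}{r}z'=(\lambda_{0,\alpha}-\frac{k^2}{r^2})z+m_0^*z$ on $(0,r_0^* )\cup(r_0^*,R)$, with $[\![\sigma_\alpha z']\!](r_0^* )=-\kappa u_{0,\alpha}(r_0^* )$, $[\![z]\!](r_0^* )=-[\![\partial_ru_{0,\alpha}]\!](r_0^* )$, $z(0)=0$, $z(R)=0$. *)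

(* Defs.v *)
From Stdlib Require Import Reals.
From Coquelicot Require Import Coquelicot.
Open Scope R_scope.

(* m_0^* = kappa * indicator of the open ball B(0,r0), as a radial profile. *)
Definition mstar (kappa r0 : R) (r : R) : R :=
  if Rlt_dec r r0 then kappa else 0.

Definition sigma (alpha kappa r0 : R) (r : R) : R :=
  1 + alpha * mstar kappa r0 r.

Definition radial_eq_at (s m lam k : R) (f : R -> R) (r : R) : Prop :=
  ex_derive f r /\ ex_derive (Derive f) r /\
  - s * Derive (Derive f) r - s / r * Derive f r
    = (lam - k ^ 2 / r ^ 2) * f r + m * f r.

(* (lam, u) is the principal Dirichlet eigenpair of
   u |-> - div(sigma_alpha grad u) - m_0^* u on B(0,Rad) (in R^2),
   described through the radial profile u : [0,Rad] -> R:
   u solves the radial equation (k = 0) on (0,r0) and (r0,Rad), is continuous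
   on [0,Rad] (in particular bounded at 0 and continuous across r0),
   satisfies the transmission condition [[sigma u']](r0) = 0,
   the Dirichlet condition u(Rad) = 0, is positive on [0,Rad)
   (positivity characterizes the principal eigenfunction), and is
   L^2(Omega)-normalized: int_Omega u^2 = 2 pi int_0^Rad u(r)^2 r dr = 1. *)
Definition principal_pair (Rad kappa r0 alpha lam : R) (u : R -> R) : Prop :=
  (forall r, 0 < r < Rad -> r <> r0 ->
     radial_eq_at (sigma alpha kappa r0 r) (mstar kappa r0 r) lam 0 u r) /\
  filterlim u (at_right 0) (locally (u 0)) /\
  continuous u r0 /\
  filterlim u (at_left Rad) (locally (u Rad)) /\
  u Rad = 0 /\
  (forall r, 0 <= r < Rad -> 0 < u r) /\
  (exists di de : R,
     filterlim (fun r => sigma alpha kappa r0 r * Derive u r) (at_left r0) (locally di) /\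
     filterlim (fun r => sigma alpha kappa r0 r * Derive u r) (at_right r0) (locally de) /\
     de - di = 0) /\
  2 * PI * RInt (fun r => u r ^ 2 * r) 0 Rad = 1.

(* z = z_{k,alpha}: solves the radial equation on (0,r0) and (r0,Rad) with
   [[sigma z']](r0) = - kappa u(r0), [[z]](r0) = - [[u']](r0), z(0) = 0,
   z(Rad) = 0, where [[f]] = f|ext - f|int (one-sided limits at r0). *)
Definition z_sol (Rad kappa r0 alpha lam : R) (u : R -> R) (k : R) (z : R -> R)
  : Prop :=
  (forall r, 0 < r < Rad -> r <> r0 ->
     radial_eq_at (sigma alpha kappa r0 r) (mstar kappa r0 r) lam k z r) /\
  (exists zi ze szi sze dui due : R,
     filterlim z (at_left r0) (locally zi) /\
     filterlim z (at_right r0) (locally ze) /\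
     filterlim (fun r => sigma alpha kappa r0 r * Derive z r) (at_left r0) (locally szi) /\
     filterlim (fun r => sigma alpha kappa r0 r * Derive z r) (at_right r0) (locally sze) /\
     filterlim (Derive u) (at_left r0) (locally dui) /\
     filterlim (Derive u) (at_right r0) (locally due) /\
     sze - szi = - kappa * u r0 /\
     ze - zi = - (due - dui)) /\
  z 0 = 0 /\ filterlim z (at_right 0) (locally 0) /\
  z Rad = 0 /\ filterlim z (at_left Rad) (locally 0).

(* Main.v *)
Require Import Defs.
From Stdlib Require Import Reals Lra Psatz.
From Coquelicot Require Import Coquelicot.
Import Defs.
Open Scope R_scope.

Lemma isd_cont (f : R -> R) x l : is_derive f x l -> continuity_pt f x.
Proof.
  intros H. apply continuity_pt_filterlim.
  apply (ex_derive_continuous f x). exists l. exact H.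
Qed.

Lemma mvt_le (f df : R -> R) a b M :
  (forall x, a < x < b -> is_derive f x (df x)) ->
  (forall x, a < x < b -> df x <= M) ->
  forall x y, a < x -> x <= y -> y < b -> f y - f x <= M * (y - x).
Proof.
  intros Hd Hb x y Hx Hxy Hy.
  destruct (MVT_gen f x y df) as [c [Hc Heq]].
  - intros t Ht. rewrite Rmin_left in Ht by lra. rewrite Rmax_right in Ht by lra.
    apply Hd; lra.
  - intros t Ht. rewrite Rmin_left in Ht by lra. rewrite Rmax_right in Ht by lra.
    apply (isd_cont f t (df t)). apply Hd; lra.
  - rewrite Rmin_left in Hc by lra. rewrite Rmax_right in Hc by lra.
    rewrite Heq. assert (df c <= M) by (apply Hb; lra). nra.
Qed.

Lemma mvt_ge (f df : R -> R) a b M :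
  (forall x, a < x < b -> is_derive f x (df x)) ->
  (forall x, a < x < b -> M <= df x) ->
  forall x y, a < x -> x <= y -> y < b -> M * (y - x) <= f y - f x.
Proof.
  intros Hd Hb x y Hx Hxy Hy.
  destruct (MVT_gen f x y df) as [c [Hc Heq]].
  - intros t Ht. rewrite Rmin_left in Ht by lra. rewrite Rmax_right in Ht by lra.
    apply Hd; lra.
  - intros t Ht. rewrite Rmin_left in Ht by lra. rewrite Rmax_right in Ht by lra.
    apply (isd_cont f t (df t)). apply Hd; lra.
  - rewrite Rmin_left in Hc by lra. rewrite Rmax_right in Hc by lra.
    rewrite Heq. assert (M <= df c) by (apply Hb; lra). nra.
Qed.

Lemma mvt_lt (f df : R -> R) a b :
  (forall x, a < x < b -> is_derive f x (df x)) ->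
  (forall x, a < x < b -> 0 < df x) ->
  forall x y, a < x -> x < y -> y < b -> f x < f y.
Proof.
  intros Hd Hb x y Hx Hxy Hy.
  destruct (MVT_gen f x y df) as [c [Hc Heq]].
  - intros t Ht. rewrite Rmin_left in Ht by lra. rewrite Rmax_right in Ht by lra.
    apply Hd; lra.
  - intros t Ht. rewrite Rmin_left in Ht by lra. rewrite Rmax_right in Ht by lra.
    apply (isd_cont f t (df t)). apply Hd; lra.
  - rewrite Rmin_left in Hc by lra. rewrite Rmax_right in Hc by lra.
    assert (0 < df c) by (apply Hb; lra). nra.
Qed.

Lemma lim_ge (F : (R -> Prop) -> Prop) {FF : ProperFilter F} (f : R -> R) L c :
  filterlim f F (locally L) -> F (fun x => c <= f x) -> c <= L.
Proof.
  intros Hl Hc. destruct (Rle_lt_dec c L) as [h|h]; auto.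
  exfalso. assert (He : 0 < c - L) by lra.
  pose proof (proj1 (filterlim_locally f L) Hl (mkposreal _ He)) as H1.
  destruct (filter_ex _ (filter_and _ _ H1 Hc)) as [x [Hx1 Hx2]].
  change (Rabs (f x - L) < c - L) in Hx1.
  apply Rabs_def2 in Hx1. lra.
Qed.

Lemma lim_le (F : (R -> Prop) -> Prop) {FF : ProperFilter F} (f : R -> R) L c :
  filterlim f F (locally L) -> F (fun x => f x <= c) -> L <= c.
Proof.
  intros Hl Hc. destruct (Rle_lt_dec L c) as [h|h]; auto.
  exfalso. assert (He : 0 < L - c) by lra.
  pose proof (proj1 (filterlim_locally f L) Hl (mkposreal _ He)) as H1.
  destruct (filter_ex _ (filter_and _ _ H1 Hc)) as [x [Hx1 Hx2]].
  change (Rabs (f x - L) < L - c) in Hx1.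
  apply Rabs_def2 in Hx1. lra.
Qed.

Lemma lim_lt_ev (F : (R -> Prop) -> Prop) {FF : Filter F} (f : R -> R) L c :
  filterlim f F (locally L) -> L < c -> F (fun x => f x < c).
Proof.
  intros Hl Hc. assert (He : 0 < c - L) by lra.
  pose proof (proj1 (filterlim_locally f L) Hl (mkposreal _ He)) as H1.
  revert H1. apply filter_imp. intros x Hx.
  change (Rabs (f x - L) < c - L) in Hx. apply Rabs_def2 in Hx. lra.
Qed.

Lemma lim_gt_ev (F : (R -> Prop) -> Prop) {FF : Filter F} (f : R -> R) L c :
  filterlim f F (locally L) -> c < L -> F (fun x => c < f x).
Proof.
  intros Hl Hc. assert (He : 0 < L - c) by lra.
  pose proof (proj1 (filterlim_locally f L) Hl (mkposreal _ He)) as H1.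
  revert H1. apply filter_imp. intros x Hx.
  change (Rabs (f x - L) < L - c) in Hx. apply Rabs_def2 in Hx. lra.
Qed.

Lemma at_right_ev (x : R) (P : R -> Prop) b : x < b ->
  (forall y, x < y < b -> P y) -> at_right x P.
Proof.
  intros Hb H. assert (He : 0 < b - x) by lra.
  exists (mkposreal _ He). intros y Hy Hxy. change (Rabs (y - x) < b - x) in Hy.
  apply Rabs_def2 in Hy. apply H. simpl in *. lra.
Qed.

Lemma at_left_ev (x : R) (P : R -> Prop) a : a < x ->
  (forall y, a < y < x -> P y) -> at_left x P.
Proof.
  intros Hb H. assert (He : 0 < x - a) by lra.
  exists (mkposreal _ He). intros y Hy Hxy. change (Rabs (y - x) < x - a) in Hy.
  apply Rabs_def2 in Hy. apply H. simpl in *. lra.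
Qed.

Lemma at_right_pt (x : R) (P : R -> Prop) b : x < b -> at_right x P ->
  exists y, x < y < b /\ P y.
Proof.
  intros Hb [d Hd]. exists (Rmin (x + d/2) ((x+b)/2)).
  pose proof (cond_pos d).
  assert (x < Rmin (x + d / 2) ((x + b) / 2) < b).
  { split. apply Rmin_glb_lt; lra. eapply Rle_lt_trans. apply Rmin_r. lra. }
  split; auto. apply Hd. change (Rabs (Rmin (x + d / 2) ((x + b) / 2) - x) < d).
  rewrite Rabs_right by lra. assert (Rmin (x + d / 2) ((x + b) / 2) <= x + d/2) by apply Rmin_l. lra. lra.
Qed.

Lemma at_left_pt (x : R) (P : R -> Prop) a : a < x -> at_left x P ->
  exists y, a < y < x /\ P y.
Proof.
  intros Hb [d Hd]. exists (Rmax (x - d/2) ((x+a)/2)).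
  pose proof (cond_pos d).
  assert (a < Rmax (x - d / 2) ((x + a) / 2) < x).
  { split. eapply Rlt_le_trans. 2: apply Rmax_r. lra. apply Rmax_lub_lt; lra. }
  split; auto. apply Hd. change (Rabs (Rmax (x - d / 2) ((x + a) / 2) - x) < d).
  rewrite Rabs_left by lra. assert (x - d/2 <= Rmax (x - d / 2) ((x + a) / 2)) by apply Rmax_l. lra. lra.
Qed.

Lemma cont_neg (f : R -> R) x l : is_derive f x l -> f x < 0 ->
  exists d, 0 < d /\ forall y, Rabs (y - x) < d -> f y < 0.
Proof.
  intros Hd Hx.
  assert (Hc : filterlim f (locally x) (locally (f x))).
  { apply (ex_derive_continuous f x). exists l; exact Hd. }
  pose proof (lim_lt_ev _ f (f x) 0 Hc Hx) as [d Hd'].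
  exists d. split. apply cond_pos. intros y Hy. apply Hd'. exact Hy.
Qed.

Lemma mvt_lt2 (f df : R -> R) a b x y :
  (forall t, a < t < b -> is_derive f t (df t)) ->
  (forall t, x <= t <= y -> 0 < df t) ->
  a < x -> x < y -> y < b -> f x < f y.
Proof.
  intros Hd Hb Hx Hxy Hy.
  destruct (MVT_gen f x y df) as [c [Hc Heq]].
  - intros t Ht. rewrite Rmin_left in Ht by lra. rewrite Rmax_right in Ht by lra.
    apply Hd; lra.
  - intros t Ht. rewrite Rmin_left in Ht by lra. rewrite Rmax_right in Ht by lra.
    apply (isd_cont f t (df t)). apply Hd; lra.
  - rewrite Rmin_left in Hc by lra. rewrite Rmax_right in Hc by lra.
    assert (0 < df c) by (apply Hb; lra). nra.
Qed.

Lemma lim_plus (F : (R -> Prop) -> Prop) {FF : Filter F} (f g : R -> R) a b :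
  filterlim f F (locally a) -> filterlim g F (locally b) ->
  filterlim (fun x => f x + g x) F (locally (a + b)).
Proof.
  intros Hf Hg. apply (filterlim_comp_2 f g Rplus Hf Hg).
  apply (filterlim_plus a b).
Qed.

Lemma lim_mult (F : (R -> Prop) -> Prop) {FF : Filter F} (f g : R -> R) a b :
  filterlim f F (locally a) -> filterlim g F (locally b) ->
  filterlim (fun x => f x * g x) F (locally (a * b)).
Proof.
  intros Hf Hg. apply (filterlim_comp_2 f g Rmult Hf Hg).
  apply (filterlim_mult a b).
Qed.

Lemma lim_const (F : (R -> Prop) -> Prop) {FF : Filter F} (c : R) :
  filterlim (fun _ => c) F (locally c).
Proof. apply filterlim_const. Qed.

Lemma lim_opp (F : (R -> Prop) -> Prop) {FF : Filter F} (f : R -> R) a :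
  filterlim f F (locally a) -> filterlim (fun x => - f x) F (locally (- a)).
Proof.
  intros Hf. replace (-a) with (-1 * a) by ring.
  apply (filterlim_ext (fun x => -1 * f x)). intros; ring.
  apply lim_mult; auto. apply lim_const. auto.
Qed.

Lemma lim_minus (F : (R -> Prop) -> Prop) {FF : Filter F} (f g : R -> R) a b :
  filterlim f F (locally a) -> filterlim g F (locally b) ->
  filterlim (fun x => f x - g x) F (locally (a - b)).
Proof. intros. apply lim_plus; auto. apply lim_opp; auto. Qed.

Lemma lim_ext_ev (F : (R -> Prop) -> Prop) {FF : Filter F} (f g : R -> R) a :
  F (fun x => f x = g x) -> filterlim f F (locally a) -> filterlim g F (locally a).
Proof. intros. apply (filterlim_ext_loc f g); auto. Qed.

Lemma lim_uniq (F : (R -> Prop) -> Prop) {FF : ProperFilter F} (f : R -> R) a b :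
  filterlim f F (locally a) -> filterlim f F (locally b) -> a = b.
Proof.
  intros Ha Hb. destruct (Rtotal_order a b) as [h|[h|h]]; auto; exfalso.
  - pose proof (lim_lt_ev F f a ((a+b)/2) Ha ltac:(lra)).
    pose proof (lim_gt_ev F f b ((a+b)/2) Hb ltac:(lra)).
    destruct (filter_ex _ (filter_and _ _ H H0)) as [x [H1 H2]]. lra.
  - pose proof (lim_gt_ev F f a ((a+b)/2) Ha ltac:(lra)).
    pose proof (lim_lt_ev F f b ((a+b)/2) Hb ltac:(lra)).
    destruct (filter_ex _ (filter_and _ _ H H0)) as [x [H1 H2]]. lra.
Qed.

Lemma lim_id_right x : filterlim (fun t => t) (at_right x) (locally x).
Proof. apply (filterlim_filter_le_1 _ (filter_le_within _)). apply filterlim_id. Qed.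
Lemma lim_id_left x : filterlim (fun t => t) (at_left x) (locally x).
Proof. apply (filterlim_filter_le_1 _ (filter_le_within _)). apply filterlim_id. Qed.
Lemma cont_right (f : R -> R) x : continuous f x -> filterlim f (at_right x) (locally (f x)).
Proof. intros H. apply (filterlim_filter_le_1 _ (filter_le_within _)). exact H. Qed.
Lemma cont_left (f : R -> R) x : continuous f x -> filterlim f (at_left x) (locally (f x)).
Proof. intros H. apply (filterlim_filter_le_1 _ (filter_le_within _)). exact H. Qed.

Lemma is_derive_ln x : 0 < x -> is_derive ln x (/ x).
Proof. intros. apply is_derive_Reals. apply derivable_pt_lim_ln; auto. Qed.

Section FB.
Variables (a b : R) (q W P Q : R -> R).
Hypothesis Hq : forall x, a < x < b -> is_derive q x (P x * W x).
Hypothesis HW : forall x, a < x < b -> is_derive W x (Q x * q x).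
Hypothesis HP : forall x, a < x < b -> 0 < P x.
Hypothesis HQ : forall x, a < x < b -> 0 < Q x.

Let Phi t := W t * q t.
Let dPhi t := Q t * q t * q t + W t * (P t * W t).

Lemma Phi_der x : a < x < b -> is_derive Phi x (dPhi x).
Proof.
  intros H. unfold Phi, dPhi.
  pose proof (is_derive_mult W q x _ _ (HW x H) (Hq x H)) as Hm.
  simpl in Hm. apply Hm. intros; apply Rmult_comm.
Qed.

Lemma dPhi_ge x : a < x < b -> 0 <= dPhi x.
Proof.
  intros H. unfold dPhi. pose proof (HP x H); pose proof (HQ x H).
  assert (0 <= Q x * (q x * q x)) by (apply Rmult_le_pos; nra).
  assert (0 <= P x * (W x * W x)) by (apply Rmult_le_pos; nra). nra.
Qed.

Lemma Phi_mono x y : a < x -> x <= y -> y < b -> Phi x <= Phi y.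
Proof.
  intros. pose proof (mvt_ge Phi dPhi a b 0 Phi_der dPhi_ge x y). 
  assert (0 * (y - x) <= Phi y - Phi x) by auto. lra.
Qed.

Lemma q_cont x : a < x < b -> continuity_pt q x.
Proof. intros H. exact (isd_cont q x _ (Hq x H)). Qed.

Lemma fwd r1 : a < r1 < b -> q r1 < 0 -> W r1 <= 0 ->
  forall r, r1 <= r < b -> q r < 0 /\ W r <= 0.
Proof.
  intros Hr1 Hq1 HW1.
  destruct (cont_neg q r1 _ (Hq r1 Hr1) Hq1) as [d [Hd Hneg]].
  set (r1' := Rmin (r1 + d/2) ((r1+b)/2)).
  assert (Hr1' : r1 < r1' < b).
  { unfold r1'; split. apply Rmin_glb_lt; lra. eapply Rle_lt_trans. apply Rmin_r. lra. }
  assert (Hr1'd : r1' <= r1 + d/2) by apply Rmin_l.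
  assert (Hneg' : forall t, r1 <= t <= r1' -> q t < 0).
  { intros t Ht. apply Hneg. rewrite Rabs_right; lra. }
  assert (HPhi0 : 0 <= Phi r1) by (unfold Phi; nra).
  assert (HPhi1 : Phi r1 < Phi r1').
  { apply (mvt_lt2 Phi dPhi a b r1 r1'); try lra.
    - intros x Hx. apply Phi_der. lra.
    - intros x Hx. unfold dPhi. assert (q x < 0) by (apply Hneg'; lra).
      assert (0 < Q x) by (apply HQ; lra). assert (0 < P x) by (apply HP; lra).
      assert (0 < Q x * (q x * q x)) by (apply Rmult_lt_0_compat; nra).
      assert (0 <= P x * (W x * W x)) by (apply Rmult_le_pos; nra). nra. }
  assert (Hqr : forall r, r1 <= r < b -> q r < 0).
  { intros r Hr. destruct (Rlt_le_dec (q r) 0) as [h|h]; auto. exfalso.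
    assert (Hrr : r1' < r).
    { destruct (Rle_lt_dec r r1'); auto. assert (q r < 0) by (apply Hneg'; lra). lra. }
    assert (exists r3, r1' <= r3 <= r /\ q r3 = 0) as [r3 [Hr3 Hq3]].
    { destruct h as [h|h].
      - destruct (Ranalysis5.IVT_interv q r1' r) as [r3 [Hr3 Hq3]]; try lra.
        + intros t Ht. apply q_cont. lra.
        + apply Hneg'; lra.
        + exists r3; auto.
      - exists r; split; [lra|auto]. }
    assert (Phi r1' <= Phi r3) by (apply Phi_mono; lra).
    unfold Phi at 2 in H. rewrite Hq3 in H. lra. }
  intros r Hr. split. apply Hqr; auto.
  assert (Phi r1 <= Phi r) by (apply Phi_mono; lra).
  unfold Phi in H. assert (q r < 0) by (apply Hqr; auto). nra.
Qed.

Lemma bwd r1 : a < r1 < b -> q r1 < 0 -> 0 <= W r1 ->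
  forall r, a < r <= r1 -> q r < 0 /\ 0 <= W r.
Proof.
  intros Hr1 Hq1 HW1.
  destruct (cont_neg q r1 _ (Hq r1 Hr1) Hq1) as [d [Hd Hneg]].
  set (r1' := Rmax (r1 - d/2) ((r1+a)/2)).
  assert (Hr1' : a < r1' < r1).
  { unfold r1'; split. eapply Rlt_le_trans. 2: apply Rmax_r. lra. apply Rmax_lub_lt; lra. }
  assert (Hr1'd : r1 - d/2 <= r1') by apply Rmax_l.
  assert (Hneg' : forall t, r1' <= t <= r1 -> q t < 0).
  { intros t Ht. apply Hneg. rewrite Rabs_left1; lra. }
  assert (HPhi0 : Phi r1 <= 0) by (unfold Phi; nra).
  assert (HPhi1 : Phi r1' < Phi r1).
  { apply (mvt_lt2 Phi dPhi a b r1' r1); try lra.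
    - intros x Hx. apply Phi_der. lra.
    - intros x Hx. unfold dPhi. assert (q x < 0) by (apply Hneg'; lra).
      assert (0 < Q x) by (apply HQ; lra). assert (0 < P x) by (apply HP; lra).
      assert (0 < Q x * (q x * q x)) by (apply Rmult_lt_0_compat; nra).
      assert (0 <= P x * (W x * W x)) by (apply Rmult_le_pos; nra). nra. }
  assert (Hqr : forall r, a < r <= r1 -> q r < 0).
  { intros r Hr. destruct (Rlt_le_dec (q r) 0) as [h|h]; auto. exfalso.
    assert (Hrr : r < r1').
    { destruct (Rle_lt_dec r1' r); auto. assert (q r < 0) by (apply Hneg'; lra). lra. }
    assert (exists r3, r <= r3 <= r1' /\ q r3 = 0) as [r3 [Hr3 Hq3]].
    { destruct h as [h|h].
      - destruct (Ranalysis5.IVT_interv (fun t => - q t) r r1') as [r3 [Hr3 Hq3]]; try lra.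
        + intros t Ht. apply continuity_pt_opp. apply q_cont. lra.
        + assert (q r1' < 0) by (apply Hneg'; lra). lra.
        + exists r3; split; auto. lra.
      - exists r; split; [lra|auto]. }
    assert (Phi r3 <= Phi r1') by (apply Phi_mono; lra).
    unfold Phi at 1 in H. rewrite Hq3 in H. lra. }
  intros r Hr. split. apply Hqr; auto.
  assert (Phi r <= Phi r1) by (apply Phi_mono; lra).
  unfold Phi in H. assert (q r < 0) by (apply Hqr; auto). nra.
Qed.
End FB.

Lemma isd_rmul (f : R -> R) r d : is_derive f r d ->
  is_derive (fun t => t * f t) r (f r + r * d).
Proof.
  intros H. pose proof (is_derive_mult (fun t => t) f r 1 d (is_derive_id r) H) as Hm.
  simpl in Hm. replace (f r + r * d) with (plus (mult 1 (f r)) (mult r d)).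
  apply Hm. intros; apply Rmult_comm.
  unfold plus, mult; simpl. ring.
Qed.

Lemma radial_deriv s m lam k f r : 0 < r -> 0 < s -> radial_eq_at s m lam k f r ->
  is_derive (fun t => t * Derive f t) r (- r * ((lam - k^2/r^2) + m) * f r / s).
Proof.
  intros Hr Hs [H1 [H2 H3]].
  pose proof (isd_rmul (Derive f) r _ (Derive_correct _ _ H2)) as H.
  replace (- r * ((lam - k^2/r^2) + m) * f r / s) with (Derive f r + r * Derive (Derive f) r).
  exact H.
  assert (E : ((lam - k^2/r^2) + m) * f r = - s * Derive (Derive f) r - s / r * Derive f r)
    by (rewrite H3; ring).
  replace (- r * ((lam - k^2/r^2) + m) * f r / s) with (- r * (((lam - k^2/r^2) + m) * f r) / s) by (field; lra).
  rewrite E. field. lra.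
Qed.

Lemma sig_in alpha kappa r0 r : r < r0 -> sigma alpha kappa r0 r = 1 + alpha * kappa.
Proof. intros H. unfold sigma, mstar. destruct (Rlt_dec r r0); [reflexivity|lra]. Qed.
Lemma sig_out alpha kappa r0 r : r0 < r -> sigma alpha kappa r0 r = 1.
Proof. intros H. unfold sigma, mstar. destruct (Rlt_dec r r0); [lra|ring]. Qed.
Lemma m_in kappa r0 r : r < r0 -> mstar kappa r0 r = kappa.
Proof. intros H. unfold mstar. destruct (Rlt_dec r r0); [reflexivity|lra]. Qed.
Lemma m_out kappa r0 r : r0 < r -> mstar kappa r0 r = 0.
Proof. intros H. unfold mstar. destruct (Rlt_dec r r0); [lra|reflexivity]. Qed.

Lemma W_der s m lam u z r : 0 < r -> 0 < s ->
  radial_eq_at s m lam 0 u r -> radial_eq_at s m lam 1 z r ->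
  is_derive (fun t => s * (u t * (t * Derive z t) - z t * (t * Derive u t))) r (u r * z r / r).
Proof.
  intros Hr Hs Hu Hz.
  pose proof (radial_deriv _ _ _ _ _ _ Hr Hs Hu) as Au.
  pose proof (radial_deriv _ _ _ _ _ _ Hr Hs Hz) as Az.
  destruct Hu as [Hu1 _]; destruct Hz as [Hz1 _].
  pose proof (Derive_correct _ _ Hu1) as Du. pose proof (Derive_correct _ _ Hz1) as Dz.
  pose proof (is_derive_mult _ _ r _ _ Du Az ltac:(intros; apply Rmult_comm)) as P1.
  pose proof (is_derive_mult _ _ r _ _ Dz Au ltac:(intros; apply Rmult_comm)) as P2.
  pose proof (is_derive_minus _ _ r _ _ P1 P2) as P3.
  pose proof (is_derive_scal _ r s _ P3) as P4.
  simpl in P4. unfold plus, mult, minus, opp in P4; simpl in P4.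
  unfold plus, opp in P4; simpl in P4.
  match goal with |- is_derive ?F r ?l => replace l with (s *
       (Derive u r * (r * Derive z r) + u r * (- r * ((lam - 1 ^ 2 / r ^ 2) + m) * z r / s) +
        - (Derive z r * (r * Derive u r) + z r * (- r * ((lam - 0 ^ 2 / r ^ 2) + m) * u r / s)))) end.
  exact P4.
  field. lra.
Qed.

Lemma isd_minus (f g : R -> R) x a b : is_derive f x a -> is_derive g x b ->
  is_derive (fun t => f t - g t) x (a - b).
Proof. intros Hf Hg. exact (is_derive_minus _ _ _ _ _ Hf Hg). Qed.
Lemma isd_plus (f g : R -> R) x a b : is_derive f x a -> is_derive g x b ->
  is_derive (fun t => f t + g t) x (a + b).
Proof. intros Hf Hg. exact (is_derive_plus _ _ _ _ _ Hf Hg). Qed.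

Lemma mvt_le3 (f df : R -> R) a b M x y :
  (forall t, a < t < b -> is_derive f t (df t)) ->
  (forall t, x <= t <= y -> df t <= M) ->
  a < x -> x <= y -> y < b -> f y - f x <= M * (y - x).
Proof.
  intros Hd Hb Hx Hxy Hy. destruct (Req_dec x y). subst. lra.
  destruct (MVT_gen f x y df) as [c [Hc Heq]].
  - intros t Ht. rewrite Rmin_left in Ht by lra. rewrite Rmax_right in Ht by lra.
    apply Hd; lra.
  - intros t Ht. rewrite Rmin_left in Ht by lra. rewrite Rmax_right in Ht by lra.
    apply (isd_cont f t (df t)). apply Hd; lra.
  - rewrite Rmin_left in Hc by lra. rewrite Rmax_right in Hc by lra.
    rewrite Heq. assert (df c <= M) by (apply Hb; lra). nra.
Qed.

Lemma mvt_ge3 (f df : R -> R) a b M x y :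
  (forall t, a < t < b -> is_derive f t (df t)) ->
  (forall t, x <= t <= y -> M <= df t) ->
  a < x -> x <= y -> y < b -> M * (y - x) <= f y - f x.
Proof.
  intros Hd Hb Hx Hxy Hy. destruct (Req_dec x y). subst. lra.
  destruct (MVT_gen f x y df) as [c [Hc Heq]].
  - intros t Ht. rewrite Rmin_left in Ht by lra. rewrite Rmax_right in Ht by lra.
    apply Hd; lra.
  - intros t Ht. rewrite Rmin_left in Ht by lra. rewrite Rmax_right in Ht by lra.
    apply (isd_cont f t (df t)). apply Hd; lra.
  - rewrite Rmin_left in Hc by lra. rewrite Rmax_right in Hc by lra.
    rewrite Heq. assert (M <= df c) by (apply Hb; lra). nra.
Qed.

Lemma mvt_gt2 (f df : R -> R) a b x y :
  (forall t, a < t < b -> is_derive f t (df t)) ->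
  (forall t, x <= t <= y -> df t < 0) ->
  a < x -> x < y -> y < b -> f y < f x.
Proof.
  intros Hd Hb Hx Hxy Hy.
  destruct (MVT_gen f x y df) as [c [Hc Heq]].
  - intros t Ht. rewrite Rmin_left in Ht by lra. rewrite Rmax_right in Ht by lra.
    apply Hd; lra.
  - intros t Ht. rewrite Rmin_left in Ht by lra. rewrite Rmax_right in Ht by lra.
    apply (isd_cont f t (df t)). apply Hd; lra.
  - rewrite Rmin_left in Hc by lra. rewrite Rmax_right in Hc by lra.
    assert (df c < 0) by (apply Hb; lra). nra.
Qed.

Lemma at_left_int (x c : R) (P : R -> Prop) : c < x -> at_left x P ->
  exists a, c <= a < x /\ forall y, a < y < x -> P y.
Proof.
  intros Hc [d Hd]. pose proof (cond_pos d).
  exists (Rmax c (x - d/2)). split. split. apply Rmax_l. apply Rmax_lub_lt; lra.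
  intros y Hy. assert (x - d/2 <= Rmax c (x - d/2)) by apply Rmax_r.
  apply Hd. change (Rabs (y - x) < d). rewrite Rabs_left; lra. lra.
Qed.

Lemma squeeze0 (F : (R -> Prop) -> Prop) {FF : Filter F} (f g h : R -> R) C :
  0 <= C -> filterlim f F (locally 0) -> filterlim g F (locally 0) ->
  F (fun t => Rabs (h t) <= C * Rabs (f t) + C * Rabs (g t)) ->
  filterlim h F (locally 0).
Proof.
  intros HC Hf Hg Hh. apply filterlim_locally. intros eps.
  set (e := eps / (2 * (C + 1))).
  assert (He : 0 < e) by (unfold e; apply Rdiv_lt_0_compat; [apply cond_pos|lra]).
  pose proof (proj1 (filterlim_locally f 0) Hf (mkposreal _ He)) as H1.
  pose proof (proj1 (filterlim_locally g 0) Hg (mkposreal _ He)) as H2.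
  generalize (filter_and _ _ Hh (filter_and _ _ H1 H2)). apply filter_imp.
  intros t [Ht [Hft Hgt]].
  change (Rabs (f t - 0) < e) in Hft. change (Rabs (g t - 0) < e) in Hgt.
  change (Rabs (h t - 0) < eps).
  rewrite Rminus_0_r in *.
  assert (C * Rabs (f t) <= C * e) by (apply Rmult_le_compat_l; lra).
  assert (C * Rabs (g t) <= C * e) by (apply Rmult_le_compat_l; lra).
  assert (2 * (C * e) < eps).
  { unfold e. pose proof (cond_pos eps). 
    replace (2 * (C * (eps / (2 * (C + 1))))) with (eps * (C / (C + 1))) by (field; lra).
    assert (C / (C+1) < 1). { apply Rmult_lt_reg_r with (C+1). lra. unfold Rdiv. rewrite Rmult_assoc, Rinv_l by lra. lra. }
    nra. }
  lra.
Qed.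

Section Main.
Variables Rad kappa r0 alpha lam : R.
Variables u z : R -> R.
Hypothesis Hr0 : 0 < r0.
Hypothesis HrR : r0 < Rad.
Hypothesis Hk : 0 < kappa.
Hypothesis Ha : 0 <= alpha.
Hypothesis Hu_ode : forall r, 0 < r < Rad -> r <> r0 ->
  radial_eq_at (sigma alpha kappa r0 r) (mstar kappa r0 r) lam 0 u r.
Hypothesis Hu0 : filterlim u (at_right 0) (locally (u 0)).
Hypothesis Huc : continuous u r0.
Hypothesis HuR : filterlim u (at_left Rad) (locally 0).
Hypothesis Hpos : forall r, 0 <= r < Rad -> 0 < u r.
Variables di de : R.
Hypothesis Hdi : filterlim (fun r => sigma alpha kappa r0 r * Derive u r) (at_left r0) (locally di).
Hypothesis Hde : filterlim (fun r => sigma alpha kappa r0 r * Derive u r) (at_right r0) (locally de).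
Hypothesis Hdide : de = di.

Let si := 1 + alpha * kappa.
Let u0 := u r0.

Lemma si_ge1 : 1 <= si.
Proof. unfold si. nra. Qed.
Lemma u0_pos : 0 < u0.
Proof. apply Hpos. lra. Qed.

Lemma Lu_in r : 0 < r < r0 -> radial_eq_at si kappa lam 0 u r.
Proof. intros H. pose proof (Hu_ode r ltac:(lra) ltac:(lra)). rewrite sig_in, m_in in H0 by lra. exact H0. Qed.
Lemma Lu_out r : r0 < r < Rad -> radial_eq_at 1 0 lam 0 u r.
Proof. intros H. pose proof (Hu_ode r ltac:(lra) ltac:(lra)). rewrite sig_out, m_out in H0 by lra. exact H0. Qed.

Definition dF r := - r * ((lam - 0^2/r^2) + kappa) * u r / (1 + alpha * kappa).
Definition dG r := - r * ((lam - 0^2/r^2) + 0) * u r / 1.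

Lemma F_der r : 0 < r < r0 -> is_derive (fun t => t * Derive u t) r (dF r).
Proof. intros H. apply radial_deriv. lra. pose proof si_ge1; unfold si in *; lra. apply Lu_in; auto. Qed.
Lemma G_der r : r0 < r < Rad -> is_derive (fun t => t * Derive u t) r (dG r).
Proof. intros H. apply radial_deriv. lra. lra. apply Lu_out; auto. Qed.

Lemma dF_val r : 0 < r -> dF r = - (lam + kappa) * r * u r / si.
Proof. intros. unfold dF, si. field. split. pose proof si_ge1; unfold si in *; lra. lra. Qed.
Lemma dG_val r : 0 < r -> dG r = - lam * r * u r.
Proof. intros. unfold dG. field. lra. Qed.

Lemma u_der r : 0 < r < Rad -> r <> r0 -> is_derive u r (Derive u r).
Proof. intros. apply Derive_correct. apply (Hu_ode r H H0). Qed.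

Lemma LG : filterlim (fun t => t * Derive u t) (at_right r0) (locally (r0 * de)).
Proof.
  apply (lim_ext_ev _ (fun t => t * (sigma alpha kappa r0 t * Derive u t))).
  apply (at_right_ev r0 _ Rad HrR). intros y Hy. rewrite sig_out by lra. ring.
  exact (lim_mult _ _ _ _ _ (lim_id_right r0) Hde).
Qed.

Lemma S1a : 0 <= lam + kappa -> forall r, 0 < r < r0 -> r * Derive u r <= 0.
Proof.
  intros Hl r1 Hr1. destruct (Rle_lt_dec (r1 * Derive u r1) 0) as [h|h]; auto. exfalso.
  set (c := r1 * Derive u r1) in *.
  assert (Hmono : forall t, 0 < t <= r1 -> c <= t * Derive u t).
  { intros t Ht. destruct (Req_dec t r1). subst t. unfold c; lra.
    pose proof (mvt_le (fun t => t * Derive u t) dF 0 r0 0 F_der) as M.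
    assert (forall x, 0 < x < r0 -> dF x <= 0).
    { intros x Hx. rewrite dF_val by lra. pose proof (Hpos x ltac:(lra)). pose proof si_ge1.
      assert (0 <= (lam+kappa)*x*u x) by (apply Rmult_le_pos; [apply Rmult_le_pos|]; lra).
      assert (0 < /si) by (apply Rinv_0_lt_compat; lra). unfold Rdiv. nra. }
    specialize (M H0 t r1 ltac:(lra) ltac:(lra) ltac:(lra)). unfold c. lra. }
  set (r2 := r1 / 2).
  set (g := fun t => u t - c * ln t).
  assert (Hg : forall x, 0 < x < r1 -> is_derive g x (Derive u x - c * / x)).
  { intros x Hx. unfold g. apply isd_minus. apply u_der; lra.
    apply is_derive_scal. apply is_derive_ln. lra. }
  assert (Hgb : forall x, 0 < x < r1 -> 0 <= Derive u x - c * / x).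
  { intros x Hx. specialize (Hmono x ltac:(lra)).
    assert (c / x <= Derive u x).
    { apply Rmult_le_reg_r with x. lra. unfold Rdiv. rewrite Rmult_assoc, Rinv_l by lra. lra. }
    unfold Rdiv in H. lra. }
  set (t := r2 * exp (- (u r2 / c))).
  assert (Hu2 : 0 < u r2) by (apply Hpos; unfold r2; lra).
  assert (Hc : 0 < c) by lra.
  assert (Ht : 0 < t <= r2).
  { unfold t. split. apply Rmult_lt_0_compat. unfold r2; lra. apply exp_pos.
    assert (exp (- (u r2 / c)) < 1).
    { rewrite <- exp_0. apply exp_increasing. assert (0 < u r2 / c) by (apply Rdiv_lt_0_compat; lra). lra. }
    assert (0 < r2) by (unfold r2; lra). nra. }
  pose proof (mvt_ge g _ 0 r1 0 Hg Hgb t r2 ltac:(lra) ltac:(lra) ltac:(unfold r2; lra)) as M.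
  unfold g in M.
  assert (Hlt : ln t = ln r2 - u r2 / c).
  { unfold t. rewrite ln_mult, ln_exp. ring. unfold r2; lra. apply exp_pos. }
  rewrite Hlt in M.
  assert (c * (u r2 / c) = u r2) by (field; lra).
  assert (0 < u t) by (apply Hpos; unfold r2 in *; lra).
  nra.
Qed.

Lemma S1b : lam + kappa <= 0 -> forall r, 0 < r < r0 -> 0 <= r * Derive u r.
Proof.
  intros Hl r1 Hr1. destruct (Rle_lt_dec 0 (r1 * Derive u r1)) as [h|h]; auto. exfalso.
  set (c := - (r1 * Derive u r1)) in *.
  assert (Hmono : forall t, 0 < t <= r1 -> t * Derive u t <= - c).
  { intros t Ht. destruct (Req_dec t r1). subst t. unfold c; lra.
    pose proof (mvt_ge (fun t => t * Derive u t) dF 0 r0 0 F_der) as M.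
    assert (forall x, 0 < x < r0 -> 0 <= dF x).
    { intros x Hx. rewrite dF_val by lra. pose proof (Hpos x ltac:(lra)). pose proof si_ge1.
      assert (0 <= -(lam+kappa)*x*u x) by (apply Rmult_le_pos; [apply Rmult_le_pos|]; lra).
      assert (0 < /si) by (apply Rinv_0_lt_compat; lra). unfold Rdiv. nra. }
    specialize (M H0 t r1 ltac:(lra) ltac:(lra) ltac:(lra)). unfold c. lra. }
  set (r2 := r1 / 2).
  set (g := fun t => u t + c * ln t).
  assert (Hc : 0 < c) by (unfold c; lra).
  assert (Hg : forall x, 0 < x < r1 -> is_derive g x (Derive u x + c * / x)).
  { intros x Hx. unfold g. apply isd_plus. apply u_der; lra.
    apply is_derive_scal. apply is_derive_ln. lra. }
  assert (Hgb : forall x, 0 < x < r1 -> Derive u x + c * / x <= 0).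
  { intros x Hx. specialize (Hmono x ltac:(lra)).
    assert (Derive u x <= - c / x).
    { apply Rmult_le_reg_r with x. lra. unfold Rdiv. rewrite Rmult_assoc, Rinv_l by lra. lra. }
    unfold Rdiv in H. lra. }
  set (A := Rabs (u 0 + 1 - u r2) + 1).
  assert (HA : 0 < A) by (unfold A; pose proof (Rabs_pos (u 0 + 1 - u r2)); lra).
  set (T0 := r2 * exp (- (A / c))).
  assert (HT0 : 0 < T0 < r2).
  { unfold T0. assert (0 < r2) by (unfold r2; lra). split. apply Rmult_lt_0_compat. lra. apply exp_pos.
    assert (exp (- (A / c)) < 1).
    { rewrite <- exp_0. apply exp_increasing. assert (0 < A / c) by (apply Rdiv_lt_0_compat; lra). lra. }
    nra. }
  pose proof (lim_lt_ev _ u (u 0) (u 0 + 1) Hu0 ltac:(lra)) as Hev.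
  destruct (at_right_pt 0 _ T0 ltac:(lra) Hev) as [y [Hy Huy]].
  pose proof (mvt_le g _ 0 r1 0 Hg Hgb y r2 ltac:(lra) ltac:(lra) ltac:(unfold r2; lra)) as M.
  unfold g in M.
  assert (Hlt : ln T0 = ln r2 - A / c).
  { unfold T0. rewrite ln_mult, ln_exp. ring. unfold r2; lra. apply exp_pos. }
  assert (ln y < ln T0) by (apply ln_increasing; lra).
  assert (c * (A / c) = A) by (field; lra).
  assert (u 0 + 1 - u r2 <= Rabs (u 0 + 1 - u r2)) by apply Rle_abs.
  assert (c * (ln r2 - ln y) > A).
  { assert (ln r2 - ln y > A / c) by lra.
    apply Rmult_gt_compat_l with (r := c) in H2; lra. }
  unfold A in H2. nra.
Qed.

Lemma lim_u_right : filterlim u (at_right r0) (locally u0).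
Proof. apply cont_right. exact Huc. Qed.

Lemma S1 : 0 < lam + kappa.
Proof.
  destruct (Rlt_le_dec 0 (lam + kappa)) as [h|h]; auto. exfalso.
  pose proof (S1b h) as HF.
  assert (Hdi0 : 0 <= di).
  { apply (lim_ge _ _ di 0 Hdi). apply (at_left_ev r0 _ 0 Hr0). intros y Hy.
    rewrite sig_in by lra. specialize (HF y Hy). pose proof si_ge1.
    assert (0 <= Derive u y).
    { destruct (Rle_lt_dec 0 (Derive u y)) as [h2|h2]; auto. nra. }
    unfold si in *. nra. }
  assert (HG : forall r, r0 < r < Rad -> r0 * de <= r * Derive u r).
  { intros r Hr. apply (lim_le _ _ _ _ LG). apply (at_right_ev r0 _ r ltac:(lra)). intros x Hx.
    pose proof (mvt_ge _ dG r0 Rad 0 G_der) as M.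
    assert (forall t, r0 < t < Rad -> 0 <= dG t).
    { intros t Ht. rewrite dG_val by lra. pose proof (Hpos t ltac:(lra)).
      assert (0 <= - lam) by lra. assert (0 <= -lam * t) by nra. nra. }
    specialize (M H x r ltac:(lra) ltac:(lra) ltac:(lra)). lra. }
  assert (Hdu : forall r, r0 < r < Rad -> 0 <= Derive u r).
  { intros r Hr. specialize (HG r Hr). rewrite Hdide in HG.
    assert (0 <= r * Derive u r) by nra.
    destruct (Rle_lt_dec 0 (Derive u r)) as [h2|h2]; auto. nra. }
  assert (Hug : forall r, r0 < r < Rad -> u0 <= u r).
  { intros r Hr. apply (lim_le _ _ _ _ lim_u_right). apply (at_right_ev r0 _ r ltac:(lra)). intros x Hx.
    pose proof (mvt_ge u (Derive u) r0 Rad 0) as M.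
    assert (forall t, r0 < t < Rad -> is_derive u t (Derive u t)) by (intros; apply u_der; lra).
    specialize (M H Hdu x r ltac:(lra) ltac:(lra) ltac:(lra)). lra. }
  assert (u0 <= 0).
  { apply (lim_ge _ _ _ _ HuR). apply (at_left_ev Rad _ r0 HrR). intros y Hy. apply Hug; lra. }
  pose proof u0_pos. lra.
Qed.

Lemma S1di : di <= 0.
Proof.
  pose proof (S1a ltac:(pose proof S1; lra)) as HF.
  apply (lim_le _ _ di 0 Hdi). apply (at_left_ev r0 _ 0 Hr0). intros y Hy.
  rewrite sig_in by lra. specialize (HF y Hy). pose proof si_ge1.
  assert (Derive u y <= 0).
  { destruct (Rle_lt_dec (Derive u y) 0) as [h2|h2]; auto. nra. }
  unfold si in *. nra.
Qed.

Lemma u_der_all : forall t, r0 < t < Rad -> is_derive u t (Derive u t).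
Proof. intros; apply u_der; lra. Qed.

Lemma S2d : forall r, r0 < r < Rad -> Derive u r <= 0.
Proof.
  destruct (Rle_lt_dec 0 lam) as [hl|hl].
  - intros r Hr.
    assert (r * Derive u r <= r0 * de).
    { apply (lim_ge _ _ _ _ LG). apply (at_right_ev r0 _ r ltac:(lra)). intros x Hx.
      pose proof (mvt_le _ dG r0 Rad 0 G_der) as M.
      assert (forall t, r0 < t < Rad -> dG t <= 0).
      { intros t Ht. rewrite dG_val by lra. pose proof (Hpos t ltac:(lra)).
        assert (0 <= lam * t) by nra. nra. }
      specialize (M H x r ltac:(lra) ltac:(lra) ltac:(lra)). lra. }
    rewrite Hdide in H. pose proof S1di.
    assert (r * Derive u r <= 0) by nra.
    destruct (Rle_lt_dec (Derive u r) 0) as [h2|h2]; auto. nra.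
  - intros r1 Hr1. destruct (Rle_lt_dec (Derive u r1) 0) as [h|h]; auto. exfalso.
    assert (HdG : forall t, r0 < t < Rad -> 0 <= dG t).
    { intros t Ht. rewrite dG_val by lra. pose proof (Hpos t ltac:(lra)).
      assert (0 <= - lam * t) by nra. nra. }
    assert (Hd : forall r, r1 <= r < Rad -> 0 < Derive u r).
    { intros r Hr. pose proof (mvt_ge _ dG r0 Rad 0 G_der HdG r1 r ltac:(lra) ltac:(lra) ltac:(lra)).
      assert (0 < r1 * Derive u r1) by nra.
      assert (0 < r * Derive u r) by lra.
      destruct (Rlt_le_dec 0 (Derive u r)) as [h2|h2]; auto. nra. }
    set (m := (r1 + Rad)/2).
    assert (Hm : forall r, m <= r < Rad -> u m <= u r).
    { intros r Hr. pose proof (mvt_ge u (Derive u) r1 Rad 0) as M.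
      assert (forall t, r1 < t < Rad -> is_derive u t (Derive u t)) by (intros; apply u_der; lra).
      assert (forall t, r1 < t < Rad -> 0 <= Derive u t) by (intros t Ht; left; apply Hd; lra).
      specialize (M H H0 m r ltac:(unfold m; lra) ltac:(lra) ltac:(lra)). lra. }
    assert (u m <= 0).
    { apply (lim_ge _ _ _ _ HuR). apply (at_left_ev Rad _ m ltac:(unfold m; lra)). intros y Hy. apply Hm; lra. }
    assert (0 < u m) by (apply Hpos; unfold m; lra). lra.
Qed.

Lemma S2 : forall r, r0 < r < Rad -> u r <= u0.
Proof.
  intros r Hr. apply (lim_ge _ _ _ _ lim_u_right). apply (at_right_ev r0 _ r ltac:(lra)). intros x Hx.
  pose proof (mvt_le u (Derive u) r0 Rad 0 u_der_all S2d x r ltac:(lra) ltac:(lra) ltac:(lra)). lra.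
Qed.

Definition Gam := (kappa * Rad^2 + Rad / (Rad - r0)) / r0.

Lemma S3 : - di <= Gam * u0.
Proof.
  pose proof S1 as HS1. pose proof u0_pos as Hu0p.
  assert (HdG : forall t, r0 < t < Rad -> dG t <= kappa * Rad * u0).
  { intros t Ht. rewrite dG_val by lra. pose proof (Hpos t ltac:(lra)). pose proof (S2 t Ht).
    assert (- lam * (t * u t) <= kappa * (t * u t)) by (apply Rmult_le_compat_r; nra).
    assert (t * u t <= Rad * u0) by (apply Rmult_le_compat; lra).
    nra. }
  assert (HG : forall r, r0 < r < Rad -> r * Derive u r <= r0 * de + kappa * Rad^2 * u0).
  { intros r Hr.
    assert (r * Derive u r - kappa * Rad^2 * u0 <= r0 * de).
    { apply (lim_ge _ _ _ _ LG). apply (at_right_ev r0 _ r ltac:(lra)). intros x Hx.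
      pose proof (mvt_le _ dG r0 Rad _ G_der HdG x r ltac:(lra) ltac:(lra) ltac:(lra)).
      assert (kappa * Rad * u0 * (r - x) <= kappa * Rad^2 * u0).
      { assert (0 <= kappa * Rad * u0) by (apply Rmult_le_pos; [apply Rmult_le_pos|]; lra).
        assert (r - x <= Rad) by lra. simpl. nra. }
      lra. }
    lra. }
  rewrite Hdide in HG.
  set (K := - r0 * di - kappa * Rad^2 * u0).
  assert (HGam : Gam * u0 = (kappa * Rad^2 * u0 + Rad / (Rad - r0) * u0) / r0) by (unfold Gam; field; lra).
  destruct (Rle_lt_dec K 0) as [hK|hK].
  - rewrite HGam. apply Rmult_le_reg_r with r0. lra. unfold Rdiv. rewrite Rmult_assoc, Rinv_l by lra.
    assert (0 <= Rad / (Rad - r0) * u0) by (apply Rmult_le_pos; [apply Rdiv_le_0_compat|]; lra).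
    unfold K in hK. unfold Rdiv in H. lra.
  - assert (Hd : forall t, r0 < t < Rad -> Derive u t <= - K / Rad).
    { intros t Ht. specialize (HG t Ht).
      assert (t * Derive u t <= - K) by (unfold K; lra).
      assert (Derive u t <= 0) by (apply S2d; auto).
      assert (Rad * Derive u t <= t * Derive u t) by nra.
      apply Rmult_le_reg_l with Rad. lra. unfold Rdiv. field_simplify. lra. lra. }
    assert (Hh : forall r, r0 < r < Rad -> u r + K / Rad * r <= u0 + K / Rad * r0).
    { intros r Hr.
      assert (filterlim (fun x => u x + K / Rad * x) (at_right r0) (locally (u0 + K / Rad * r0))).
      { refine (lim_plus _ _ _ _ _ _ _). apply lim_u_right. refine (lim_mult _ _ _ _ _ _ _). refine (lim_const _ _). apply lim_id_right. }
      apply (lim_ge _ _ _ _ H). apply (at_right_ev r0 _ r ltac:(lra)). intros x Hx.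
      pose proof (mvt_le u (Derive u) r0 Rad _ u_der_all Hd x r ltac:(lra) ltac:(lra) ltac:(lra)).
      assert (- K / Rad * (r - x) = - (K / Rad * r) + K / Rad * x) by (unfold Rdiv; ring). lra. }
    assert (0 + K / Rad * Rad <= u0 + K / Rad * r0).
    { apply (lim_le (at_left Rad) (fun r => u r + K / Rad * r)). refine (lim_plus _ _ _ _ _ _ _). exact HuR. refine (lim_mult _ _ _ _ _ _ _). refine (lim_const _ _).
      apply lim_id_left. apply (at_left_ev Rad _ r0 HrR). intros y Hy. apply Hh; lra. }
    assert (K / Rad * Rad = K) by (field; lra).
    assert (K * (Rad - r0) <= u0 * Rad).
    { assert (K / Rad * r0 * Rad = K * r0) by (field; lra).
      assert (K <= u0 + K / Rad * r0) by lra.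
      apply Rmult_le_compat_r with (r := Rad) in H2; lra. }
    assert (K <= u0 * Rad / (Rad - r0)).
    { apply Rmult_le_reg_r with (Rad - r0). lra. unfold Rdiv. rewrite Rmult_assoc, Rinv_l by lra. lra. }
    rewrite HGam. apply Rmult_le_reg_r with r0. lra. unfold Rdiv. rewrite Rmult_assoc, Rinv_l by lra.
    unfold K in H2. unfold Rdiv in H2. lra.
Qed.

Hypothesis Hz_ode : forall r, 0 < r < Rad -> r <> r0 ->
  radial_eq_at (sigma alpha kappa r0 r) (mstar kappa r0 r) lam 1 z r.
Variables zi ze szi sze dui due : R.
Hypothesis Hzi : filterlim z (at_left r0) (locally zi).
Hypothesis Hze : filterlim z (at_right r0) (locally ze).
Hypothesis Hszi : filterlim (fun r => sigma alpha kappa r0 r * Derive z r) (at_left r0) (locally szi).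
Hypothesis Hsze : filterlim (fun r => sigma alpha kappa r0 r * Derive z r) (at_right r0) (locally sze).
Hypothesis Hdui : filterlim (Derive u) (at_left r0) (locally dui).
Hypothesis Hdue : filterlim (Derive u) (at_right r0) (locally due).
Hypothesis Hjs : sze - szi = - kappa * u r0.
Hypothesis Hjz : ze - zi = - (due - dui).
Hypothesis Hz0 : filterlim z (at_right 0) (locally 0).
Hypothesis HzR : filterlim z (at_left Rad) (locally 0).

Lemma Lz_in r : 0 < r < r0 -> radial_eq_at si kappa lam 1 z r.
Proof. intros H. pose proof (Hz_ode r ltac:(lra) ltac:(lra)). rewrite sig_in, m_in in H0 by lra. exact H0. Qed.
Lemma Lz_out r : r0 < r < Rad -> radial_eq_at 1 0 lam 1 z r.
Proof. intros H. pose proof (Hz_ode r ltac:(lra) ltac:(lra)). rewrite sig_out, m_out in H0 by lra. exact H0. Qed.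

Lemma dui_val : dui = di / si.
Proof.
  apply (lim_uniq (at_left r0) (Derive u)); auto.
  apply (lim_ext_ev _ (fun t => / si * (sigma alpha kappa r0 t * Derive u t))).
  apply (at_left_ev r0 _ 0 Hr0). intros y Hy. rewrite sig_in by lra. fold si. field.
  pose proof si_ge1; lra.
  replace (di / si) with (/ si * di) by (unfold Rdiv; ring).
  refine (lim_mult _ _ _ _ _ _ _). refine (lim_const _ _). exact Hdi.
Qed.

Lemma due_val : due = de.
Proof.
  apply (lim_uniq (at_right r0) (Derive u)); auto.
  apply (lim_ext_ev _ (fun t => sigma alpha kappa r0 t * Derive u t)).
  apply (at_right_ev r0 _ Rad HrR). intros y Hy. rewrite sig_out by lra. ring.
  exact Hde.
Qed.

Definition Wf t := t * (u t * (sigma alpha kappa r0 t * Derive z t) - z t * (sigma alpha kappa r0 t * Derive u t)).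
Definition qf t := z t / u t.
Definition Pf t := / (sigma alpha kappa r0 t * t * u t ^ 2).
Definition Qf t := u t ^ 2 / t.

Lemma sig_pos t : 0 < sigma alpha kappa r0 t.
Proof. unfold sigma, mstar. destruct (Rlt_dec t r0); nra. Qed.

Lemma Pf_pos t : 0 < t < Rad -> 0 < Pf t.
Proof. intros H. unfold Pf. apply Rinv_0_lt_compat. pose proof (sig_pos t). pose proof (Hpos t ltac:(lra)).
  apply Rmult_lt_0_compat. nra. apply pow_lt; lra. Qed.
Lemma Qf_pos t : 0 < t < Rad -> 0 < Qf t.
Proof. intros H. unfold Qf. pose proof (Hpos t ltac:(lra)). apply Rdiv_lt_0_compat. apply pow_lt; lra. lra. Qed.

Lemma W_in r : 0 < r < r0 -> is_derive Wf r (Qf r * qf r).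
Proof.
  intros H. pose proof (W_der si kappa lam u z r ltac:(lra) ltac:(pose proof si_ge1; lra) (Lu_in r H) (Lz_in r H)) as D.
  apply (is_derive_ext_loc _ Wf) in D.
  - replace (Qf r * qf r) with (u r * z r / r). exact D.
    unfold Qf, qf. field. pose proof (Hpos r ltac:(lra)). lra.
  - generalize (open_lt r0 r ltac:(lra)). apply filter_imp. intros t Ht. cbv beta in *. unfold Wf. rewrite sig_in by lra. fold si. match goal with |- ?a = ?b => change (@eq R a b) end. ring.
Qed.

Lemma W_out r : r0 < r < Rad -> is_derive Wf r (Qf r * qf r).
Proof.
  intros H. pose proof (W_der 1 0 lam u z r ltac:(lra) ltac:(lra) (Lu_out r H) (Lz_out r H)) as D.
  apply (is_derive_ext_loc _ Wf) in D.
  - replace (Qf r * qf r) with (u r * z r / r). exact D.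
    unfold Qf, qf. field. pose proof (Hpos r ltac:(lra)). lra.
  - generalize (open_gt r0 r ltac:(lra)). apply filter_imp. intros t Ht. cbv beta in *. unfold Wf. rewrite sig_out by lra. match goal with |- ?a = ?b => change (@eq R a b) end. ring.
Qed.

Lemma q_der r : 0 < r < Rad -> r <> r0 -> is_derive qf r (Pf r * Wf r).
Proof.
  intros H H0. pose proof (Hpos r ltac:(lra)).
  assert (Dz : is_derive z r (Derive z r)) by (apply Derive_correct; apply (Hz_ode r H H0)).
  pose proof (is_derive_div z u r _ _ Dz (u_der r H H0) ltac:(lra)) as D.
  replace (Pf r * Wf r) with ((Derive z r * u r - z r * Derive u r) / u r ^ 2). exact D.
  unfold Pf, Wf. pose proof (sig_pos r). field. repeat split; lra.
Qed.

Lemma LWi : filterlim Wf (at_left r0) (locally (r0 * (u0 * szi - zi * di))).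
Proof.
  refine (lim_mult _ _ _ _ _ _ _). apply lim_id_left.
  refine (lim_minus _ _ _ _ _ _ _); refine (lim_mult _ _ _ _ _ _ _); auto. apply cont_left; exact Huc.
Qed.
Lemma LWe : filterlim Wf (at_right r0) (locally (r0 * (u0 * sze - ze * de))).
Proof.
  refine (lim_mult _ _ _ _ _ _ _). apply lim_id_right.
  refine (lim_minus _ _ _ _ _ _ _); refine (lim_mult _ _ _ _ _ _ _); auto. apply cont_right; exact Huc.
Qed.

Definition dA t := - t * ((lam - 1^2/t^2) + 0) * z t / 1.
Lemma A_der r : r0 < r < Rad -> is_derive (fun t => t * Derive z t) r (dA r).
Proof. intros H. apply radial_deriv. lra. lra. apply Lz_out; auto. Qed.

Lemma abs_bound (f df : R -> R) a b M x0 :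
  (forall t, a < t < b -> is_derive f t (df t)) ->
  (forall t, a < t < b -> Rabs (df t) <= M) ->
  a < x0 < b -> 0 <= M ->
  forall t, x0 <= t < b -> Rabs (f t) <= Rabs (f x0) + M * (b - a).
Proof.
  intros Hd Hb Hx0 HM t Ht.
  assert (H1 : forall s, a < s < b -> df s <= M) by (intros s Hs; specialize (Hb s Hs); apply Rabs_le_between in Hb ; lra).
  assert (H2 : forall s, a < s < b -> - M <= df s) by (intros s Hs; specialize (Hb s Hs); apply Rabs_le_between in Hb; lra).
  pose proof (mvt_le f df a b M Hd H1 x0 t ltac:(lra) ltac:(lra) ltac:(lra)).
  pose proof (mvt_ge f df a b (-M) Hd H2 x0 t ltac:(lra) ltac:(lra) ltac:(lra)).
  assert (M * (t - x0) <= M * (b - a)) by (apply Rmult_le_compat_l; lra).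
  apply Rabs_le_between. pose proof (Rabs_le_between (f x0) (Rabs (f x0))) as [Hr _].
  destruct (Hr (Rle_refl _)). split; lra.
Qed.

Lemma LWR : filterlim Wf (at_left Rad) (locally 0).
Proof.
  assert (Hz1 : at_left Rad (fun t => Rabs (z t) < 1)).
  { pose proof (proj1 (filterlim_locally z 0) HzR (mkposreal 1 Rlt_0_1)) as H.
    revert H. apply filter_imp. intros t Ht. change (Rabs (z t - 0) < 1) in Ht. rewrite Rminus_0_r in Ht. exact Ht. }
  destruct (at_left_int Rad r0 _ HrR Hz1) as [a1 [Ha1 Hza]].
  set (x0 := (a1 + Rad) / 2).
  set (MA := Rabs lam * Rad + / r0).
  assert (HMA : 0 <= MA).
  { unfold MA. pose proof (Rabs_pos lam). assert (0 < / r0) by (apply Rinv_0_lt_compat; lra). nra. }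
  assert (HdA : forall t, a1 < t < Rad -> Rabs (dA t) <= MA).
  { intros t Ht. unfold dA.
    replace (- t * ((lam - 1 ^ 2 / t ^ 2) + 0) * z t / 1) with (- (lam * t - / t) * z t) by (field; lra).
    rewrite Rabs_mult, Rabs_Ropp.
    pose proof (Hza t Ht). pose proof (Rabs_pos (z t)).
    assert (Rabs (lam * t - / t) <= MA).
    { eapply Rle_trans. apply Rabs_triang. rewrite Rabs_Ropp, Rabs_mult.
      rewrite (Rabs_right t) by lra. rewrite (Rabs_right (/ t)) by (left; apply Rinv_0_lt_compat; lra).
      unfold MA. pose proof (Rabs_pos lam).
      assert (Rabs lam * t <= Rabs lam * Rad) by (apply Rmult_le_compat_l; lra).
      assert (/ t <= / r0) by (apply Rinv_le_contravar; lra). lra. }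
    pose proof (Rabs_pos (lam * t - / t)). nra. }
  set (MB := Rabs lam * Rad * u0).
  assert (HMB : 0 <= MB) by (unfold MB; pose proof (Rabs_pos lam); pose proof u0_pos;
    apply Rmult_le_pos; [apply Rmult_le_pos|]; lra).
  assert (HdB : forall t, a1 < t < Rad -> Rabs (dG t) <= MB).
  { intros t Ht. rewrite dG_val by lra. pose proof (Hpos t ltac:(lra)). pose proof (S2 t ltac:(lra)).
    replace (- lam * t * u t) with (- (lam * (t * u t))) by ring.
    rewrite Rabs_Ropp, Rabs_mult. rewrite (Rabs_right (t * u t)) by nra.
    unfold MB. pose proof (Rabs_pos lam). assert (t * u t <= Rad * u0) by (apply Rmult_le_compat; lra).
    rewrite Rmult_assoc. apply Rmult_le_compat_l; lra. }
  assert (HAd : forall t, a1 < t < Rad -> is_derive (fun t => t * Derive z t) t (dA t)) by (intros; apply A_der; lra).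
  assert (HBd : forall t, a1 < t < Rad -> is_derive (fun t => t * Derive u t) t (dG t)) by (intros; apply G_der; lra).
  pose proof (abs_bound _ _ a1 Rad MA x0 HAd HdA ltac:(unfold x0; lra) HMA) as BA.
  pose proof (abs_bound _ _ a1 Rad MB x0 HBd HdB ltac:(unfold x0; lra) HMB) as BB.
  set (CA := Rabs (x0 * Derive z x0) + MA * (Rad - a1)) in BA.
  set (CB := Rabs (x0 * Derive u x0) + MB * (Rad - a1)) in BB.
  assert (0 <= CA) by (unfold CA; pose proof (Rabs_pos (x0 * Derive z x0)); assert (0 <= MA * (Rad - a1)) by (apply Rmult_le_pos; lra); lra).
  assert (0 <= CB) by (unfold CB; pose proof (Rabs_pos (x0 * Derive u x0)); assert (0 <= MB * (Rad - a1)) by (apply Rmult_le_pos; lra); lra).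
  assert (HC : 0 <= CA + CB) by (apply Rplus_le_le_0_compat; assumption).
  apply (squeeze0 _ u z Wf (CA + CB) HC HuR HzR).
  apply (at_left_ev Rad _ x0 ltac:(unfold x0; lra)). intros t Ht. unfold x0 in Ht.
  unfold Wf. rewrite sig_out by lra.
  replace (t * (u t * (1 * Derive z t) - z t * (1 * Derive u t))) with (u t * (t * Derive z t) - z t * (t * Derive u t)) by ring.
  specialize (BA t ltac:(unfold x0; lra)). specialize (BB t ltac:(unfold x0; lra)).
  eapply Rle_trans. apply Rabs_triang. rewrite Rabs_Ropp, (Rabs_mult (u t)), (Rabs_mult (z t)).
  pose proof (Rabs_pos (u t)). pose proof (Rabs_pos (z t)).
  assert (Rabs (u t) * Rabs (t * Derive z t) <= (CA + CB) * Rabs (u t)) by nra.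
  assert (Rabs (z t) * Rabs (t * Derive u t) <= (CA + CB) * Rabs (z t)) by nra.
  lra.
Qed.

Lemma zq t : 0 <= t < Rad -> z t = qf t * u t.
Proof. intros H. unfold qf. pose proof (Hpos t H). field. lra. Qed.

Lemma qd_in x : 0 < x < r0 -> is_derive qf x (Pf x * Wf x).
Proof. intros. apply q_der; lra. Qed.
Lemma qd_out x : r0 < x < Rad -> is_derive qf x (Pf x * Wf x).
Proof. intros. apply q_der; lra. Qed.
Lemma Pf_in x : 0 < x < r0 -> 0 < Pf x.
Proof. intros. apply Pf_pos; lra. Qed.
Lemma Qf_in x : 0 < x < r0 -> 0 < Qf x.
Proof. intros. apply Qf_pos; lra. Qed.
Lemma Pf_o x : r0 < x < Rad -> 0 < Pf x.
Proof. intros. apply Pf_pos; lra. Qed.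
Lemma Qf_o x : r0 < x < Rad -> 0 < Qf x.
Proof. intros. apply Qf_pos; lra. Qed.

Lemma qneg t : 0 < t < Rad -> z t < 0 -> qf t < 0.
Proof. intros H H1. unfold qf. pose proof (Hpos t ltac:(lra)). apply Rdiv_neg_pos; lra. Qed.

Lemma SB r1 : 0 < r1 < r0 -> z r1 < 0 -> zi < 0 /\ r0 * (u0 * szi - zi * di) < 0.
Proof.
  intros Hr1 Hz1. pose proof (qneg r1 ltac:(lra) Hz1) as Hq1.
  destruct (Rlt_le_dec (Wf r1) 0) as [hW|hW].
  - pose proof (fwd 0 r0 qf Wf Pf Qf qd_in W_in Pf_in Qf_in r1 Hr1 Hq1 (Rlt_le _ _ hW)) as F.
    assert (HWm : forall r, r1 <= r < r0 -> Wf r <= Wf r1).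
    { intros r Hr. assert (Wf r - Wf r1 <= 0 * (r - r1)).
      { apply (mvt_le3 Wf (fun t => Qf t * qf t) 0 r0); try lra. apply W_in.
        intros t Ht. destruct (F t ltac:(lra)). pose proof (Qf_in t ltac:(lra)). nra. }
      lra. }
    assert (Hqm : forall r, r1 <= r < r0 -> qf r <= qf r1).
    { intros r Hr. assert (qf r - qf r1 <= 0 * (r - r1)).
      { apply (mvt_le3 qf (fun t => Pf t * Wf t) 0 r0); try lra. apply qd_in.
        intros t Ht. destruct (F t ltac:(lra)). pose proof (Pf_in t ltac:(lra)). nra. }
      lra. }
    split.
    + assert (zi - qf r1 * u0 <= 0).
      { apply (lim_le (at_left r0) (fun t => z t - qf r1 * u t)).
        refine (lim_minus _ _ _ _ _ _ _). exact Hzi. refine (lim_mult _ _ _ _ _ _ _). refine (lim_const _ _).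
        apply cont_left; exact Huc.
        apply (at_left_ev r0 _ r1 ltac:(lra)). intros y Hy. rewrite (zq y) by lra.
        pose proof (Hqm y ltac:(lra)). pose proof (Hpos y ltac:(lra)). nra. }
      pose proof u0_pos. nra.
    + assert (r0 * (u0 * szi - zi * di) <= Wf r1).
      { apply (lim_le (at_left r0) Wf _ _ LWi). apply (at_left_ev r0 _ r1 ltac:(lra)). intros y Hy. apply HWm; lra. }
      lra.
  - exfalso. pose proof (bwd 0 r0 qf Wf Pf Qf qd_in W_in Pf_in Qf_in r1 Hr1 Hq1 hW) as B.
    assert (Hqm : forall r, 0 < r <= r1 -> qf r <= qf r1).
    { intros r Hr. assert (0 * (r1 - r) <= qf r1 - qf r).
      { apply (mvt_ge3 qf (fun t => Pf t * Wf t) 0 r0); try lra. apply qd_in.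
        intros t Ht. destruct (B t ltac:(lra)). pose proof (Pf_in t ltac:(lra)). nra. }
      lra. }
    assert (0 - qf r1 * u 0 <= 0).
    { apply (lim_le (at_right 0) (fun t => z t - qf r1 * u t)).
      refine (lim_minus _ _ _ _ _ _ _). exact Hz0. refine (lim_mult _ _ _ _ _ _ _). refine (lim_const _ _).
      exact Hu0.
      apply (at_right_ev 0 _ r1 ltac:(lra)). intros y Hy. rewrite (zq y) by lra.
      pose proof (Hqm y ltac:(lra)). pose proof (Hpos y ltac:(lra)). nra. }
    pose proof (Hpos 0 ltac:(lra)). nra.
Qed.

Lemma SAout r1 : r0 < r1 < Rad -> z r1 < 0 -> Wf r1 <= 0 -> False.
Proof.
  intros Hr1 Hz1 hW. pose proof (qneg r1 ltac:(lra) Hz1) as Hq1.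
  pose proof (fwd r0 Rad qf Wf Pf Qf qd_out W_out Pf_o Qf_o r1 Hr1 Hq1 hW) as F.
  set (r2 := (r1 + Rad) / 2).
  assert (Wf r2 < Wf r1).
  { apply (mvt_gt2 Wf (fun t => Qf t * qf t) r0 Rad); try (unfold r2; lra). apply W_out.
    intros t Ht. unfold r2 in Ht. destruct (F t ltac:(lra)). pose proof (Qf_o t ltac:(lra)). nra. }
  assert (HWm : forall r, r2 <= r < Rad -> Wf r <= Wf r2).
  { intros r Hr. assert (Wf r - Wf r2 <= 0 * (r - r2)).
    { apply (mvt_le3 Wf (fun t => Qf t * qf t) r0 Rad); try (unfold r2 in *; lra). apply W_out.
      intros t Ht. unfold r2 in *. destruct (F t ltac:(lra)). pose proof (Qf_o t ltac:(lra)). nra. }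
    lra. }
  assert (0 <= Wf r2).
  { apply (lim_le (at_left Rad) Wf _ _ LWR). apply (at_left_ev Rad _ r2 ltac:(unfold r2; lra)). intros y Hy. apply HWm; lra. }
  lra.
Qed.

Lemma SA : 0 <= ze -> forall r, r0 < r < Rad -> 0 <= z r.
Proof.
  intros Hze0 r1 Hr1. destruct (Rle_lt_dec 0 (z r1)) as [h|Hz1]; auto. exfalso.
  destruct (Rle_lt_dec (Wf r1) 0) as [hW|hW]. exact (SAout r1 Hr1 Hz1 hW).
  pose proof (qneg r1 ltac:(lra) Hz1) as Hq1.
  pose proof (bwd r0 Rad qf Wf Pf Qf qd_out W_out Pf_o Qf_o r1 Hr1 Hq1 (Rlt_le _ _ hW)) as B.
  assert (Hqm : forall r, r0 < r <= r1 -> qf r <= qf r1).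
  { intros r Hr. assert (0 * (r1 - r) <= qf r1 - qf r).
    { apply (mvt_ge3 qf (fun t => Pf t * Wf t) r0 Rad); try lra. apply qd_out.
      intros t Ht. destruct (B t ltac:(lra)). pose proof (Pf_o t ltac:(lra)). nra. }
    lra. }
  assert (ze - qf r1 * u0 <= 0).
  { apply (lim_le (at_right r0) (fun t => z t - qf r1 * u t)).
    refine (lim_minus _ _ _ _ _ _ _). exact Hze. refine (lim_mult _ _ _ _ _ _ _). refine (lim_const _ _).
    apply cont_right; exact Huc.
    apply (at_right_ev r0 _ r1 ltac:(lra)). intros y Hy. rewrite (zq y) by lra.
    pose proof (Hqm y ltac:(lra)). pose proof (Hpos y ltac:(lra)). nra. }
  pose proof u0_pos. nra.
Qed.

Definition abar := r0 / (r0 * Gam^2 + Gam * (Rad - r0) / r0 + 1).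

Lemma Gam_pos : 0 < Gam.
Proof.
  unfold Gam. apply Rdiv_lt_0_compat; [|lra].
  assert (0 < kappa * Rad^2) by (apply Rmult_lt_0_compat; [lra| apply pow_lt; lra]).
  assert (0 < Rad / (Rad - r0)) by (apply Rdiv_lt_0_compat; lra). lra.
Qed.

Lemma Final : alpha <= abar -> forall r, 0 < r < Rad -> r <> r0 -> 0 <= z r.
Proof.
  intros Hab.
  pose proof Gam_pos as HG. pose proof S1di as Hdi0. pose proof S3 as HS3. pose proof u0_pos as Hu0p.
  pose proof si_ge1 as Hsi.
  set (Y := r0 * Gam^2 + Gam * (Rad - r0) / r0).
  assert (HY : 0 <= Y).
  { unfold Y. assert (0 <= Gam * (Rad - r0) / r0) by (apply Rdiv_le_0_compat; [apply Rmult_le_pos|]; lra).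
    assert (0 <= r0 * Gam^2) by (apply Rmult_le_pos; [lra| apply pow_le; lra]). lra. }
  assert (HaY : alpha * Y < r0).
  { assert (abar * Y < r0).
    { unfold abar. fold Y. apply Rmult_lt_reg_r with (Y + 1). lra.
      replace (r0 / (Y + 1) * Y * (Y + 1)) with (r0 * Y) by (field; lra). nra. }
    assert (alpha * Y <= abar * Y) by (apply Rmult_le_compat_r; lra). lra. }
  assert (HaG : alpha * Gam^2 * r0 <= alpha * Y).
  { rewrite Rmult_assoc. apply Rmult_le_compat_l. lra. unfold Y. assert (0 <= Gam * (Rad - r0) / r0) by (apply Rdiv_le_0_compat; [apply Rmult_le_pos|]; lra). nra. }
  set (tau := 1 - / si).
  assert (Htt : tau = alpha * kappa / si) by (unfold tau, si; field; nra).
  assert (Hsi_def : si = 1 + alpha * kappa) by reflexivity.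
  assert (Hjs' : sze - szi = - kappa * u0) by exact Hjs. clearbody si u0.
  assert (Htt0 : 0 <= tau) by (rewrite Htt; apply Rdiv_le_0_compat; nra).
  assert (Htt1 : tau <= alpha * kappa).
  { rewrite Htt. apply Rmult_le_reg_r with si. lra. unfold Rdiv. rewrite Rmult_assoc, Rinv_l by lra. nra. }
  assert (Hjump : due - dui = di * tau) by (rewrite due_val, dui_val, Hdide; unfold tau; field; lra).
  assert (Hzev : ze = zi - di * tau) by lra.
  set (d := - di).
  assert (Hd0 : 0 <= d) by (unfold d; lra).
  assert (HdG : d <= Gam * u0) by (unfold d; lra).
  assert (Hd2 : d * d * tau <= Gam^2 * u0^2 * (alpha * kappa)).
  { assert (d * d <= Gam^2 * u0^2) by (simpl; nra).
    apply Rmult_le_compat; nra. }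
  destruct (Classical_Prop.classic (exists r1, 0 < r1 < r0 /\ z r1 < 0)) as [[r1 [Hr1 Hz1]]|Hno].
  - exfalso. destruct (SB r1 Hr1 Hz1) as [Hzi0 HWi0].
    set (Wi := r0 * (u0 * szi - zi * di)) in *.
    set (We := r0 * (u0 * sze - ze * de)).
    assert (HWe : We = Wi + r0 * (- kappa * u0^2 + d * d * tau)).
    { unfold We, Wi. rewrite Hdide.
      replace sze with (szi - kappa * u0) by lra. rewrite Hzev. unfold d. ring. }
    assert (Hkey : d * d * tau < kappa * u0^2 * (alpha * Y) / r0 + kappa * u0 ^ 2).
    { assert (0 <= kappa * u0^2 * (alpha * Y) / r0).
      { apply Rdiv_le_0_compat; [|lra]. apply Rmult_le_pos. apply Rmult_le_pos; [lra|apply pow_le; lra]. nra. }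
      assert (Gam ^ 2 * u0 ^ 2 * (alpha * kappa) * r0 <= kappa * u0^2 * (alpha * Y)).
      { assert (0 <= kappa * u0^2) by (apply Rmult_le_pos; [lra|apply pow_le; lra]).
        replace (Gam ^ 2 * u0 ^ 2 * (alpha * kappa) * r0) with (kappa * u0^2 * (alpha * Gam^2 * r0)) by ring.
        apply Rmult_le_compat_l; auto. }
      assert (Gam ^ 2 * u0 ^ 2 * (alpha * kappa) <= kappa * u0^2 * (alpha * Y) / r0).
      { apply Rmult_le_reg_r with r0. lra.
        replace (kappa * u0^2 * (alpha * Y) / r0 * r0) with (kappa*u0^2*(alpha*Y)) by (field; lra). lra. }
      assert (0 < kappa * u0 ^ 2) by (apply Rmult_lt_0_compat; [lra|apply pow_lt; lra]).
      lra. }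
    destruct (Rlt_le_dec ze 0) as [hz|hz].
    +
      assert (Hsmall : d * d * tau < kappa * u0^2).
      { assert (Gam ^ 2 * u0 ^ 2 * (alpha * kappa) * r0 <= kappa * u0^2 * (alpha * Y)).
        { assert (0 <= kappa * u0^2) by (apply Rmult_le_pos; [lra|apply pow_le; lra]).
          replace (Gam ^ 2 * u0 ^ 2 * (alpha * kappa) * r0) with (kappa * u0^2 * (alpha * Gam^2 * r0)) by ring.
          apply Rmult_le_compat_l; auto. }
        assert (kappa * u0^2 * (alpha * Y) < kappa * u0^2 * r0).
        { apply Rmult_lt_compat_l; auto. apply Rmult_lt_0_compat; [lra|apply pow_lt; lra]. }
        assert (d * d * tau * r0 < kappa * u0 ^ 2 * r0) by nra.
        apply Rmult_lt_reg_r with r0; lra. }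
      assert (HWe0 : We < 0).
      { rewrite HWe. assert (r0 * (- kappa * u0 ^ 2 + d * d * tau) < 0) by nra. lra. }
      pose proof (lim_lt_ev (at_right r0) z ze 0 Hze hz) as E1.
      pose proof (lim_lt_ev (at_right r0) Wf We 0 LWe HWe0) as E2.
      destruct (at_right_pt r0 _ Rad HrR (filter_and _ _ E1 E2)) as [r2 [Hr2 [Hz2 HW2]]].
      exact (SAout r2 Hr2 Hz2 (Rlt_le _ _ HW2)).
    + pose proof (SA hz) as Hout.
      assert (HWle : forall r, r0 < r < Rad -> Wf r <= 0).
      { intros r Hr. apply (lim_ge (at_left Rad) Wf _ _ LWR). apply (at_left_ev Rad _ r ltac:(lra)). intros y Hy.
        assert (0 * (y - r) <= Wf y - Wf r).
        { apply (mvt_ge3 Wf (fun t => Qf t * qf t) r0 Rad); try lra. apply W_out.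
          intros t Ht. pose proof (Hout t ltac:(lra)). pose proof (Hpos t ltac:(lra)).
          assert (0 <= qf t) by (unfold qf; apply Rdiv_le_0_compat; lra). pose proof (Qf_o t ltac:(lra)). nra. }
        lra. }
      assert (Hzle : forall r, r0 < r < Rad -> z r <= ze).
      { intros r Hr.
        assert (ze - qf r * u0 >= 0).
        { apply Rle_ge. apply (lim_ge (at_right r0) (fun t => z t - qf r * u t)).
          refine (lim_minus _ _ _ _ _ _ _). exact Hze. refine (lim_mult _ _ _ _ _ _ _). refine (lim_const _ _).
          exact lim_u_right.
          apply (at_right_ev r0 _ r ltac:(lra)). intros y Hy. rewrite (zq y) by lra.
          assert (qf r - qf y <= 0 * (r - y)).
          { apply (mvt_le3 qf (fun t => Pf t * Wf t) r0 Rad); try lra. apply qd_out.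
            intros t Ht. pose proof (HWle t ltac:(lra)). pose proof (Pf_o t ltac:(lra)). nra. }
          pose proof (Hpos y ltac:(lra)). nra. }
        rewrite (zq r) by lra. pose proof (S2 r Hr). pose proof (Hpos r ltac:(lra)).
        pose proof (Hout r Hr). assert (0 <= qf r) by (unfold qf; apply Rdiv_le_0_compat; lra).
        assert (qf r * u r <= qf r * u0) by (apply Rmult_le_compat_l; lra). lra. }
      set (M := u0 * ze / r0).
      assert (HM0 : 0 <= M) by (unfold M; apply Rdiv_le_0_compat; nra).
      assert (HWd : forall t, r0 < t < Rad -> Qf t * qf t <= M).
      { intros t Ht. unfold Qf, qf. pose proof (Hpos t ltac:(lra)). pose proof (S2 t Ht). pose proof (Hout t Ht).
        pose proof (Hzle t Ht).
        replace (u t ^ 2 / t * (z t / u t)) with (u t * z t / t) by (field; lra).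
        assert (u t * z t <= u0 * ze) by (apply Rmult_le_compat; lra).
        unfold M. apply Rmult_le_reg_r with (t * r0). nra.
        replace (u t * z t / t * (t * r0)) with (u t * z t * r0) by (field; lra).
        replace (u0 * ze / r0 * (t * r0)) with (u0 * ze * t) by (field; lra).
        assert (0 <= u t * z t) by nra. nra. }
      assert (HWx : forall x, r0 < x < Rad -> - M * (Rad - r0) <= Wf x).
      { intros x Hx.
        assert (0 <= Wf x + M * (Rad - r0)).
        { apply (lim_le (at_left Rad) Wf _ _ LWR). apply (at_left_ev Rad _ x ltac:(lra)). intros y Hy.
          pose proof (mvt_le Wf (fun t => Qf t * qf t) r0 Rad M W_out HWd x y ltac:(lra) ltac:(lra) ltac:(lra)).
          assert (M * (y - x) <= M * (Rad - r0)) by (apply Rmult_le_compat_l; lra). lra. }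
        lra. }
      assert (HWeM : - M * (Rad - r0) <= We).
      { apply (lim_ge (at_right r0) Wf _ _ LWe). apply (at_right_ev r0 _ Rad HrR). intros y Hy. apply HWx; lra. }
      assert (Hze2 : ze <= d * tau) by (rewrite Hzev; unfold d; lra).
      assert (HM2 : M * (Rad - r0) <= u0 * (d * tau) * (Rad - r0) / r0).
      { unfold M. replace (u0 * ze / r0 * (Rad - r0)) with ((u0*ze)*((Rad-r0)/r0)) by (field; lra).
        replace (u0 * (d * tau) * (Rad - r0) / r0) with ((u0*(d*tau))*((Rad-r0)/r0)) by (field; lra).
        apply Rmult_le_compat_r. apply Rdiv_le_0_compat; lra. apply Rmult_le_compat_l; lra. }
      assert (r0 * (kappa * u0^2 - d * d * tau) < u0 * (d * tau) * (Rad - r0) / r0).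
      { rewrite HWe in HWeM. lra. }
      assert (u0 * (d * tau) * (Rad - r0) / r0 <= u0^2 * Gam * (alpha * kappa) * (Rad - r0) / r0).
      { unfold Rdiv. apply Rmult_le_compat_r. left; apply Rinv_0_lt_compat; lra.
        apply Rmult_le_compat_r. lra.
        replace (u0 ^ 2 * Gam * (alpha * kappa)) with (u0 * ((Gam * u0) * (alpha * kappa))) by ring.
        apply Rmult_le_compat_l. lra. apply Rmult_le_compat; lra. }
      assert (r0 * (d * d * tau) <= r0 * (Gam ^ 2 * u0 ^ 2 * (alpha * kappa))) by (apply Rmult_le_compat_l; lra).
      assert (r0 * (kappa * u0^2) < kappa * u0^2 * (alpha * Y)).
      { unfold Y. 
        assert (kappa * u0 ^ 2 * (alpha * (r0 * Gam ^ 2 + Gam * (Rad - r0) / r0)) =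
                r0 * (Gam ^ 2 * u0 ^ 2 * (alpha * kappa)) + u0 ^ 2 * Gam * (alpha * kappa) * (Rad - r0) / r0)
          by (field; lra).
        lra. }
      assert (0 < kappa * u0^2) by (apply Rmult_lt_0_compat; [lra|apply pow_lt; lra]).
      nra.
  - assert (Hin : forall r, 0 < r < r0 -> 0 <= z r).
    { intros r Hr. destruct (Rle_lt_dec 0 (z r)) as [h|h]; auto. exfalso. apply Hno. exists r; auto. }
    assert (Hzi0 : 0 <= zi).
    { apply (lim_ge (at_left r0) z _ _ Hzi). apply (at_left_ev r0 _ 0 Hr0). intros y Hy. apply Hin; auto. }
    assert (Hze0 : 0 <= ze) by (rewrite Hzev; unfold d in Hd0; nra).
    intros r Hr Hrr. destruct (Rlt_le_dec r r0). apply Hin; lra. apply (SA Hze0); lra.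
Qed.
End Main.

Theorem lemma6p5 :
  forall (Rad kappa m0 r0 : R),
    0 < Rad -> 0 < m0 -> m0 < kappa -> 0 < r0 -> r0 < Rad ->
    kappa * (PI * r0 ^ 2) = m0 * (PI * Rad ^ 2) ->
    exists abar : R, 0 < abar /\
      forall (alpha lam : R) (u z : R -> R),
        0 <= alpha <= abar ->
        principal_pair Rad kappa r0 alpha lam u ->
        z_sol Rad kappa r0 alpha lam u 1 z ->
        forall r, 0 < r < Rad -> r <> r0 -> 0 <= z r.
Proof.
  intros Rad kappa m0 r0 HR Hm0 Hmk Hr0 HrR Hvol.
  assert (Hk : 0 < kappa) by lra.
  exists (abar Rad kappa r0). split.
  { unfold abar. pose proof (Gam_pos Rad kappa r0 Hr0 HrR Hk) as HG.
    apply Rdiv_lt_0_compat. lra.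
    assert (0 <= r0 * Gam Rad kappa r0 ^ 2) by (apply Rmult_le_pos; [lra|apply pow_le; lra]).
    assert (0 <= Gam Rad kappa r0 * (Rad - r0) / r0) by (apply Rdiv_le_0_compat; [apply Rmult_le_pos|]; lra).
    lra. }
  intros alpha lam u z [Ha Hab] PP ZS r Hr Hrr0.
  destruct PP as [Hode [H0 [Hc [HR' [HuRad [Hpos [[di [de [Hdi [Hde Hdd]]]] Hnorm]]]]]]].
  rewrite HuRad in HR'.
  destruct ZS as [Hzode [HZ [Hz0v [Hz0 [HzRv HzR]]]]].
  destruct HZ as [zi [ze [szi [sze [dui [due HZ]]]]]].
  destruct HZ as [Hzi [Hze [Hszi [Hsze [Hdui [Hdue [Hjs Hjz]]]]]]].
  exact (Final Rad kappa r0 alpha lam u z Hr0 HrR Hk Ha Hode H0 Hc HR' Hpos di de Hdi Hde ltac:(lra) Hzode zi ze szi sze dui due Hzi Hze Hszi Hsze Hdui Hdue Hjs Hjz Hz0 HzR Hab r Hr Hrr0).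
Qed.
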